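(* Let $f(x)\in R_k[x;\Theta]$ be a monic irreducible divisor of $x^{np^s}-\lambda$ of degree $l$ such that $f(x)^j$ is central and divides $x^{np^s}-\lambda$ ($j\ge1$), and put $\mathcal R=R_k[x;\Theta]/\langle f(x)^j\rangle$. Then every left ideal $\mathcal I$ of $\mathcal R$ (equivalently every skew $(f^j,\Theta)$-polycyclic code of length $lj$ over $R_k$) is of the form \[ \mathcal I=\sum_{i=1}^{k}\mathcal R\Big(u^{i-1}a_i(x)+\sum_{t=1}^{k-i}u^{i-1+t}r_{i,t}(x)\Big), \] where: each $a_i(x)$ is $0$ or belongs to $\mathcal B$; $a_k(x)\mid_r a_i(x)$ for all $1\le i\le k-1$; each $r_{i,t}(x)$ is an element of $\mathbb{F}_{p^m}[x;\theta]/\langle \mu_k(f(x))^j\rangle$ (a polynomial over $\mathbb{F}_{p^m}$ of degree $<lj$); and for each $2\le i\le k$ with $a_i(x)\ne0$, $\max_{1\le t\le i-1}\deg r_{t,i-t}(x)<\deg a_i(x)$. Moreover, the polynomials $r_{i,t}(x)$ satisfying these conditions are unique.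
   Context: $p$ odd prime, $m,k,n,s\ge1$, $\gcd(n,p)=1$, $R_k=\mathbb{F}_{p^m}[u]/\langle u^k\rangle$. $\Theta\in\mathrm{Aut}(R_k)$ whose order divides $np^s$, $\theta=\Theta|_{\mathbb{F}_{p^m}}$; $R_k[x;\Theta]$ is the skew polynomial ring with $xa=\Theta(a)x$, and $\mathbb{F}_{p^m}[x;\theta]$ likewise. $\lambda\in R_k^*$ with $\Theta(\lambda)=\lambda$. $\mu_k:R_k\to\mathbb{F}_{p^m}$, $\sum_{i}a_iu^i\mapsto a_0$, extended coefficientwise to polynomials. $g\mid_r h$ means $h=qg$ for some polynomial $q$. $\mathcal B$ denotes the set of monic divisors of $\mu_k(f(x)^j)$ in $\mathbb{F}_{p^m}[x;\theta]$. *)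

(* Defs.v *)
From HB Require Import structures.
From mathcomp Require Import all_boot all_order all_algebra.
Set Implicit Arguments. Unset Strict Implicit. Unset Printing Implicit Defensive.
Import GRing.Theory.
Local Open Scope ring_scope.

(* A skew polynomial sum_i a_i x^i is stored as its coefficient list {poly R};
   only the multiplication differs: x a = sigma(a) x, i.e.
   (sum_i a_i x^i)(sum_j b_j x^j) = sum_{i,j} a_i sigma^i(b_j) x^(i+j). *)
Section Skew.
Variable R : comNzRingType.
Variable sigma : R -> R.

Definition skmul (a b : {poly R}) : {poly R} :=
  \sum_(i < size a) (a`_i *: 'X^i) * map_poly (iter i sigma) b.

Definition skpow (f : {poly R}) (j : nat) : {poly R} := iter j (skmul f) 1.

Definition rdivides (g h : {poly R}) : Prop := exists q, h = skmul q g.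

Definition skunit (g : {poly R}) : Prop :=
  exists h, skmul g h = 1 /\ skmul h g = 1.

Definition skirreducible (f : {poly R}) : Prop :=
  f != 0 /\ ~ skunit f /\
  forall g h, f = skmul g h -> skunit g \/ skunit h.

Definition skcentral (f : {poly R}) : Prop := forall g, skmul f g = skmul g f.

(* J is a left ideal of R[x;sigma] containing the two-sided ideal generated by
   the central element c; such J correspond exactly to the left ideals of
   R[x;sigma]/<c>. *)
Definition left_ideal_over (c : {poly R}) (J : {poly R} -> Prop) : Prop :=
  [/\ J 0,
      (forall a b, J a -> J b -> J (a + b)),
      (forall g a, J a -> J (skmul g a)) &
      (forall q, J (skmul q c))].
End Skew.

Notation Rk F k := {poly %/ ('X^k : {poly F})}.

Section Rk.
Variables (F : fieldType) (k : nat).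

Definition uu : Rk F k := in_qpoly ('X^k : {poly F}) 'X.
Definition embF (c : F) : Rk F k := in_qpoly ('X^k : {poly F}) c%:P.
Definition mu (a : Rk F k) : F := (polyn a)`_0.
Definition mu_poly (g : {poly Rk F k}) : {poly F} := map_poly mu g.
Definition emb_poly (g : {poly F}) : {poly Rk F k} := map_poly embF g.
(* theta = Theta restricted to F (Theta maps F into F) *)
Definition theta_of (Theta : Rk F k -> Rk F k) (c : F) : F := mu (Theta (embF c)).
End Rk.

Section Thm.
Variables (F : fieldType) (k : nat) (Theta : Rk F k -> Rk F k)
          (fj : {poly Rk F k}) (lj : nat).

Definition gen_elt (a : nat -> {poly F}) (r : nat -> nat -> {poly F}) (i : nat)
  : {poly Rk F k} :=
  (uu F k ^+ i.-1) *: emb_poly k (a i) +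
  \sum_(1 <= t < (k - i).+1) (uu F k ^+ (i.-1 + t)) *: emb_poly k (r i t).

(* h belongs to sum_{i=1}^k R (gen_elt i) + <f^j>, i.e. its class lies in the
   left ideal sum_i R (gen_elt i) of R = R_k[x;Theta]/<f^j> *)
Definition in_gen_ideal a r (h : {poly Rk F k}) : Prop :=
  exists (c : nat -> {poly Rk F k}) (q : {poly Rk F k}),
    h = \sum_(1 <= i < k.+1) skmul Theta (c i) (gen_elt a r i) + skmul Theta q fj.

Definition canonical_data (a : nat -> {poly F}) (r : nat -> nat -> {poly F}) : Prop :=
  [/\ (forall i, (1 <= i <= k)%N ->
         a i = 0 \/ (a i \is monic /\
                     rdivides (theta_of Theta) (a i) (mu_poly fj))),
      (forall i, (1 <= i <= k.-1)%N -> rdivides (theta_of Theta) (a k) (a i)),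
      (forall i t, (1 <= i)%N -> (1 <= t <= k - i)%N -> (size (r i t) <= lj)%N) &
      (forall i, (2 <= i <= k)%N -> a i != 0 ->
         forall t, (1 <= t <= i.-1)%N -> (size (r t (i - t)) < size (a i))%N)].
End Thm.

(* Main.v *)
Require Import Defs.
From HB Require Import structures.
From mathcomp Require Import all_boot all_order all_algebra.
From Stdlib Require Import ClassicalEpsilon.
From mathcomp Require Import zify ring.
Set Implicit Arguments. Unset Strict Implicit. Unset Printing Implicit Defensive.
Import GRing.Theory.
Local Open Scope ring_scope.
Ltac slia := repeat match goal with
  | H : context [@size ?T ?p] |- _ => revert H
  end; repeat match goal with |- context [@size ?T ?p] => generalize (@size T p) end;
  intros; lia.
Local Notation rmodp := Pdiv.CommonRing.rmodp.
Section SkewGen.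
Variable R : comNzRingType.
Variable sg : R -> R.

Lemma skmulE N (a b : {poly R}) : (size a <= N)%N ->
  skmul sg a b = \sum_(i < N) (a`_i *: 'X^i) * map_poly (iter i sg) b.
Proof.
move=> hN; rewrite /skmul (big_ord_widen N (fun i => (a`_i *: 'X^i) * map_poly (iter i sg) b)) //.
rewrite big_mkcond /=; apply: eq_bigr => i _; case: ltnP => // hi.
by rewrite nth_default // scale0r mul0r.
Qed.

Lemma skmul0l b : skmul sg 0 b = 0.
Proof. by rewrite /skmul size_poly0 big_ord0. Qed.

Lemma skmulDl a1 a2 b : skmul sg (a1 + a2) b = skmul sg a1 b + skmul sg a2 b.
Proof.
set N := maxn (size a1) (size a2).
rewrite (@skmulE N) ?size_polyD // (@skmulE N a1) ?leq_maxl // (@skmulE N a2) ?leq_maxr //.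
rewrite -big_split /=; apply: eq_bigr => i _.
by rewrite coefD scalerDl mulrDl.
Qed.

Lemma skmulZl (e : R) a b : skmul sg (e *: a) b = e *: skmul sg a b.
Proof.
rewrite (@skmulE (size a)) ?size_scale_leq // /skmul scaler_sumr; apply: eq_bigr => i _.
by rewrite coefZ -scalerA scalerAl.
Qed.

Lemma skmulNl a b : skmul sg (- a) b = - skmul sg a b.
Proof. by rewrite -scaleN1r skmulZl scaleN1r. Qed.

Lemma skmulBl a1 a2 b : skmul sg (a1 - a2) b = skmul sg a1 b - skmul sg a2 b.
Proof. by rewrite skmulDl skmulNl. Qed.

Lemma skmulCl (e : R) b : skmul sg e%:P b = e *: b.
Proof.
rewrite (@skmulE 1) ?size_polyC_leq1 // big_ord1 coefC /= expr0.
rewrite map_poly_id //.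
by rewrite alg_polyC mul_polyC.
Qed.

Lemma skmul1l b : skmul sg 1 b = b.
Proof. by rewrite -polyC1 skmulCl scale1r. Qed.

Lemma skmulX b : skmul sg 'X b = 'X * map_poly sg b.
Proof.
rewrite (@skmulE 2) ?size_polyX // big_ord_recr big_ord1 /= !coefX /= scale0r mul0r add0r.
by rewrite scale1r expr1 (@eq_map_poly _ _ (iter 1 sg) sg).
Qed.

Lemma size_skmul a b : (size (skmul sg a b) <= (size a + size b).-1)%N.
Proof.
rewrite /skmul; apply: leq_trans (size_sum _ _ _) _; apply/bigmax_leqP => i _.
apply: leq_trans (size_polyMleq _ _) _.
have h1 : (size (a`_i *: 'X^i : {poly R}) <= i.+1)%N.
  by apply: leq_trans (size_scale_leq _ _) _; rewrite size_polyXn.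
have h2 : (size (map_poly (iter i sg) b) <= size b)%N by apply: size_poly.
have hi := ltn_ord i.
move: (size (a`_i *: 'X^i)) (size (map_poly (iter i sg) b)) h1 h2 => x y h1 h2.
move: (nat_of_ord i) hi h1 => i' hi h1; lia.
Qed.

Hypotheses (sg0 : sg 0 = 0) (sg1 : sg 1 = 1).

Lemma iter_sg0 i : iter i sg 0 = 0.
Proof. by elim: i => //= i ->. Qed.
Lemma iter_sg1 i : iter i sg 1 = 1.
Proof. by elim: i => //= i ->. Qed.

Lemma coef_skmul a b n : (skmul sg a b)`_n =
  \sum_(i < size a) a`_i * (if (n < i)%N then 0 else iter i sg b`_(n - i)).
Proof.
rewrite /skmul coef_sum; apply: eq_bigr => i _.
rewrite -scalerAl coefZ coefXnM; case: ltnP => _ //.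
by rewrite coef_map_id0 // iter_sg0.
Qed.

Lemma skmul_lead a b : b \is monic ->
  (skmul sg a b)`_((size a + size b).-2) = lead_coef a.
Proof.
move=> mb; have [->|a0] := eqVneq a 0; first by rewrite skmul0l coef0 lead_coef0.
have b0 : b != 0 by apply: monic_neq0.
rewrite coef_skmul lead_coefE.
move: (polySpred a0) (polySpred b0) => ea eb.
rewrite ea big_ord_recr /= big1 ?add0r.
  have sb : (0 < size b)%N by rewrite size_poly_gt0.
  have e1 : (((size a).-1 + size b).-1 < (size a).-1)%N = false by lia.
  have e2 : (((size a).-1 + size b).-1 - (size a).-1)%N = (size b).-1 by lia.
  rewrite e1 e2.
  have lb : b`_(size b).-1 = 1 by move/monicP: mb; rewrite lead_coefE.
  by rewrite lb iter_sg1 mulr1.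
move=> i _; have hi := ltn_ord i.
have sb : (0 < size b)%N by rewrite size_poly_gt0.
case: ltnP => hh; first by rewrite mulr0.
rewrite [b`_ _]nth_default ?iter_sg0 ?mulr0 //; move: (nat_of_ord i) hi sb => i0 h0 h1; move: (size a) (size b) h0 h1 => x y; lia.
Qed.
End SkewGen.
Section SkewGen2.
Variable R : comNzRingType.
Variable sg : R -> R.
Hypotheses (sg0 : sg 0 = 0) (sg1 : sg 1 = 1).

Lemma size_skmul_monic a b : b \is monic -> a != 0 ->
  size (skmul sg a b) = (size a + size b).-1.
Proof.
move=> mb a0; apply/eqP; rewrite eqn_leq size_skmul /=.
have b0 : b != 0 by apply: monic_neq0.
have sa : (0 < size a)%N by rewrite size_poly_gt0.
have sb : (0 < size b)%N by rewrite size_poly_gt0.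
have : (skmul sg a b)`_((size a + size b).-2) != 0 by rewrite skmul_lead // lead_coef_eq0.
apply: contraR; rewrite -ltnNge => hlt; rewrite nth_default //.
move: sa sb hlt; move: (size (skmul sg a b)) => z; move: (size a) (size b) => x y; lia.
Qed.

Lemma skmul_monic a b : a \is monic -> b \is monic -> skmul sg a b \is monic.
Proof.
move=> ma mb; have a0 : a != 0 by apply: monic_neq0.
rewrite monicE lead_coefE size_skmul_monic // skmul_lead //; apply/eqP; move/monicP: ma.

Qed.

Lemma size_lt_coef (p : {poly R}) n : (size p <= n.+1)%N -> p`_n = 0 -> (size p <= n)%N.
Proof.
move=> h1 h2; apply/leq_sizeP => j hj; have [->//|hne] := eqVneq j n.
have hlt : (n < j)%N by rewrite ltn_neqAle eq_sym hne hj.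
by rewrite nth_default //; move: h1 hlt; move: (size p) => x; lia.
Qed.

Lemma size_CXn (c : R) d : c != 0 -> size (c *: ('X^d : {poly R})) = d.+1.
Proof.
move=> c0; apply/eqP; rewrite eqn_leq (leq_trans (size_scale_leq _ _)) ?size_polyXn //.
have : (c *: ('X^d : {poly R}))`_d != 0 by rewrite coefZ coefXn eqxx mulr1.
apply: contraR; rewrite -ltnNge => h; rewrite nth_default //.
Qed.

Lemma lead_CXn (c : R) d : c != 0 -> lead_coef (c *: ('X^d : {poly R})) = c.
Proof. by move=> c0; rewrite lead_coefE size_CXn // coefZ coefXn eqxx mulr1. Qed.

Lemma skdiv b : b \is monic -> forall p, exists q r,
  p = skmul sg q b + r /\ (size r < size b)%N.
Proof.
move=> mb p.
have b0 : b != 0 by apply: monic_neq0.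
have sb : (0 < size b)%N by rewrite size_poly_gt0.
elim: (size p) {-2}p (leqnn (size p)) => [|n IH] {}p hp.
  exists 0, p; split; first by rewrite skmul0l add0r.
  by slia.
case: (ltnP (size p) (size b)) => hlt.
  by exists 0, p; rewrite skmul0l add0r.
have p0 : p != 0 by rewrite -size_poly_gt0; slia.
set c := lead_coef p; set d := (size p - size b)%N.
set q0 := c *: ('X^d : {poly R}).
have c0 : c != 0 by rewrite lead_coef_eq0.
have sq0 : size q0 = d.+1 by apply: size_CXn.
have lq0 : lead_coef q0 = c by apply: lead_CXn.
have q00 : q0 != 0 by rewrite -size_poly_gt0 sq0.
have hP1 : size (skmul sg q0 b) = size p.
  by rewrite size_skmul_monic // sq0 /d; slia.
have hP2 : (skmul sg q0 b)`_((size p).-1) = c.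
  have -> : (size p).-1 = (size q0 + size b).-2 by rewrite sq0 /d; slia.
  by rewrite skmul_lead.
have hs : (size (p - skmul sg q0 b)%R <= n)%N.
  have : (size (p - skmul sg q0 b)%R <= (size p).-1)%N.
    apply: size_lt_coef; last by rewrite coefB hP2 subrr.
    rewrite prednK; last by rewrite size_poly_gt0.
    by apply: leq_trans (size_polyD _ _) _; rewrite size_polyN hP1 maxnn.
  by move=> h; apply: leq_trans h _; slia.
have [q' [r [e1 e2]]] := IH _ hs.
exists (q' + q0), r; split; last by [].
by rewrite skmulDl -addrAC -e1 subrK.
Qed.

Lemma skdiv_small q b r : b \is monic -> r = skmul sg q b ->
  (size r < size b)%N -> r = 0.
Proof.
move=> mb -> hs; have [->|q0] := eqVneq q 0; first by rewrite skmul0l.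
move: hs; rewrite size_skmul_monic //.
have : (0 < size q)%N by rewrite size_poly_gt0.
by move: (size q) (size b) => x y; lia.
Qed.
End SkewGen2.
Section RkL.
Variables (F : fieldType) (k : nat).
Hypothesis hk : (0 < k)%N.
Local Notation R := (Rk F k).
Local Notation uu := (uu F k).
Local Notation embF := (@embF F k).
Local Notation mu := (@mu F k).

Lemma mkXk : mk_monic ('X^k : {poly F}) = 'X^k.
Proof. by rewrite mk_monic_Xn prednK. Qed.

Lemma polyn_in (p : {poly F}) : (in_qpoly ('X^k : {poly F}) p : {poly F}) = rmodp p 'X^k.
Proof. by change (rmodp p (mk_monic ('X^k : {poly F})) = rmodp p 'X^k); rewrite mkXk. Qed.

Lemma coef0_rmod (p : {poly F}) : (rmodp p 'X^k)`_0 = p`_0.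
Proof.
have := Pdiv.RingMonic.rdivp_eq (monicXn F k) p.
move=> e; rewrite [in RHS]e coefD coefMXn ifT // add0r //.
Qed.

Lemma mu_in (p : {poly F}) : mu (in_qpoly ('X^k : {poly F}) p) = p`_0.
Proof. by rewrite /mu polyn_in coef0_rmod. Qed.

Lemma in_polyn (a : R) : in_qpoly ('X^k : {poly F}) (polyn a) = a.
Proof.
apply: val_inj => /=; apply: Pdiv.CommonRing.rmodp_small; exact: size_mk_monic.
Qed.

Lemma muD a b : mu (a + b) = mu a + mu b.
Proof. by rewrite /mu /= coefD. Qed.
Lemma mu0 : mu 0 = 0.
Proof. by rewrite /mu /= coef0. Qed.
Lemma muN a : mu (- a) = - mu a.
Proof. by rewrite /mu /= coefN. Qed.
Lemma muM a b : mu (a * b) = mu a * mu b.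
Proof.
by rewrite -[a]in_polyn -[b]in_polyn -rmorphM !mu_in coef0M.
Qed.
Lemma mu1 : mu 1 = 1.
Proof. by rewrite -(in_qpoly1 ('X^k : {poly F})) mu_in coef1. Qed.
Lemma muX a n : mu (a ^+ n) = mu a ^+ n.
Proof. by elim: n => [|n IH]; rewrite ?expr0 ?mu1 // !exprS muM IH. Qed.

Lemma mu_embF c : mu (embF c) = c.
Proof. by rewrite /embF mu_in coefC. Qed.

Lemma embF0 : embF 0 = 0.
Proof. by rewrite /embF in_qpoly0. Qed.
Lemma embF1 : embF 1 = 1.
Proof. by rewrite /embF in_qpoly1. Qed.
Lemma embFD c d : embF (c + d) = embF c + embF d.
Proof. by rewrite /embF polyCD in_qpolyD. Qed.
Lemma embFM c d : embF (c * d) = embF c * embF d.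
Proof. by rewrite /embF polyCM rmorphM. Qed.
Lemma embFN c : embF (- c) = - embF c.
Proof. by rewrite /embF polyCN raddfN. Qed.

Lemma mu_uu : mu uu = 0.
Proof. by rewrite /uu mu_in coefX. Qed.

Lemma uuk : uu ^+ k = 0.
Proof.
rewrite /uu -rmorphXn; apply: val_inj => /=; rewrite mkXk.
exact: Pdiv.RingMonic.rmodpp (monicXn F k).
Qed.

Definition dec (a : R) : R := in_qpoly ('X^k : {poly F}) (drop_poly 1 (polyn a)).

Lemma decE a : a = embF (mu a) + uu * dec a.
Proof.
rewrite /embF /uu /dec -rmorphM -in_qpolyD mulrC.
have -> : (mu a)%:P = take_poly 1 (polyn a).
  apply/polyP => i; rewrite coef_take_poly coefC; case: i => //.
by rewrite poly_take_drop in_polyn.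
Qed.

Lemma dec0 : dec 0 = 0.
Proof. by rewrite /dec /= drop_poly0r in_qpoly0. Qed.

Lemma uu_neq0 : (1 < k)%N -> uu != 0.
Proof.
move=> k1; apply/eqP => /(congr1 (fun a : R => (polyn a)`_1)).
rewrite polyn_in Pdiv.CommonRing.rmodp_small; first by rewrite coefX /= coef0; apply/eqP; exact: oner_neq0.
by rewrite size_polyX size_polyXn.
Qed.
End RkL.
Section Main.
Variables (F : fieldType) (k : nat).
Hypothesis hk : (0 < k)%N.
Local Notation R := (Rk F k).
Local Notation uu := (uu F k).
Local Notation embF := (@embF F k).
Local Notation mu := (@mu F k).
Local Notation emb := (@emb_poly F k).
Local Notation mup := (@mu_poly F k).

Lemma coef_emb p i : (emb p)`_i = embF p`_i.
Proof. by rewrite coef_map_id0 // embF0. Qed.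
Lemma coef_mup P i : (mup P)`_i = mu P`_i.
Proof. by rewrite coef_map_id0 // mu0. Qed.

Lemma emb0 : emb 0 = 0.
Proof. by rewrite /emb_poly map_poly0. Qed.
Lemma embD p q : emb (p + q) = emb p + emb q.
Proof. by apply/polyP => i; rewrite coefD !coef_emb coefD embFD. Qed.
Lemma embZ c p : emb (c *: p) = embF c *: emb p.
Proof. by apply/polyP => i; rewrite coefZ !coef_emb coefZ embFM. Qed.
Lemma embXM p : emb ('X * p) = 'X * emb p.
Proof. by apply/polyP => i; rewrite coefXM !coef_emb coefXM; case: eqP => // _; rewrite embF0. Qed.
Lemma mup_emb p : mup (emb p) = p.
Proof. by apply/polyP => i; rewrite coef_mup coef_emb mu_embF. Qed.

Definition pdec (P : {poly R}) : {poly R} := map_poly (@dec F k) P.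
Lemma pdecE P : P = emb (mup P) + uu *: pdec P.
Proof.
apply/polyP => i; rewrite coefD coef_emb coef_mup coefZ coef_map_id0 ?dec0 //.
exact: decE.
Qed.

Variable Theta : {rmorphism R -> R}.
Hypothesis hTbij : bijective Theta.
Local Notation th := (theta_of Theta).

Lemma th0 : th 0 = 0.
Proof. by rewrite /theta_of embF0 rmorph0 mu0. Qed.
Lemma th1 : th 1 = 1.
Proof. by rewrite /theta_of embF1 rmorph1 mu1. Qed.
Lemma thM a b : th (a * b) = th a * th b.
Proof. by rewrite /theta_of embFM rmorphM muM. Qed.

Lemma mu_Tuu : mu (Theta uu) = 0.
Proof.
have : mu (Theta uu) ^+ k = 0 by rewrite -muX // -rmorphXn uuk // rmorph0 mu0.
by move/eqP; rewrite expf_eq0 => /andP [_ /eqP].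
Qed.

Lemma muT a : mu (Theta a) = th (mu a).
Proof.
rewrite {1}(decE a) rmorphD rmorphM muD // muM // mu_Tuu mul0r addr0.
by [].
Qed.

Definition vv := dec (Theta uu).
Lemma TuuE : Theta uu = uu * vv.
Proof. by rewrite {1}(decE (Theta uu)) mu_Tuu embF0 add0r. Qed.

Lemma th_inj_0 c : th c = 0 -> c = 0.
Proof.
move=> h; apply/eqP; apply: contraT => c0.
have : th (c * c^-1) = 1 by rewrite mulfV // th1.
by rewrite thM h mul0r => /eqP; rewrite eq_sym oner_eq0.
Qed.

Lemma e_neq0 : (1 < k)%N -> mu vv != 0.
Proof.
move=> k1; apply/eqP => e0.
have vE : vv = uu * dec vv by rewrite {1}(decE vv) e0 embF0 add0r.
case: hTbij => g gK Kg.
set w := g uu.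
have wE := decE w.
have hu : uu = Theta w by rewrite /w Kg.
have w0 : mu w = 0.
  apply: th_inj_0; rewrite -muT -hu; exact: mu_uu.
move: (dec vv) (dec w) vE wE => dv dw vE wE.
have hz : uu = uu * (uu * (dv * Theta dw)).
  rewrite {1}hu wE w0 embF0 add0r rmorphM TuuE vE; ring.
have : forall n, uu = uu * (uu * (dv * Theta dw)) ^+ n.
  elim=> [|n IH]; first by rewrite expr0 mulr1.
  by rewrite exprS mulrA -hz.
move/(_ k); rewrite exprMn uuk // mul0r mulr0 => /eqP.
by rewrite (negbTE (uu_neq0 F hk k1)).
Qed.

Definition Tor (J' : {poly R} -> Prop) s (b : {poly F}) :=
  exists h', J' (uu ^+ s *: emb b + uu ^+ s.+1 *: h').

Definition closedJ (J' : {poly R} -> Prop) :=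
  [/\ J' 0, (forall a b, J' a -> J' b -> J' (a + b)),
      (forall (e : R) a, J' a -> J' (e *: a)) &
      (forall a, J' a -> J' (skmul Theta 'X a))].

Lemma mup_Temb b : mup (map_poly Theta (emb b)) = map_poly th b.
Proof.
apply/polyP => i; rewrite coef_mup (coef_map_id0 _ _ (rmorph0 Theta)) coef_emb.
by rewrite coef_map_id0 ?th0.
Qed.

Section TorJ.
Variable J' : {poly R} -> Prop.
Hypothesis cJ : closedJ J'.

Lemma Tor0 s : Tor J' s 0.
Proof.
case: cJ => J0 _ _ _; exists 0; by rewrite emb0 !scaler0 addr0.
Qed.

Lemma TorD s b1 b2 : Tor J' s b1 -> Tor J' s b2 -> Tor J' s (b1 + b2).
Proof.
case: cJ => _ JD _ _ [h1 H1] [h2 H2]; exists (h1 + h2).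
have := JD _ _ H1 H2; congr J'.
by rewrite embD !scalerDr addrACA.
Qed.

Lemma TorZ s (c : F) b : Tor J' s b -> Tor J' s (c *: b).
Proof.
case: cJ => _ _ JZ _ [h H]; exists (embF c *: h).
have := JZ (embF c) _ H; congr J'.
by rewrite embZ scalerDr !scalerA mulrC [embF c * _]mulrC.
Qed.

Lemma TorX s b : (s < k)%N -> Tor J' s b -> Tor J' s ('X * map_poly th b).
Proof.
move=> sk [h H]; case: cJ => _ _ _ JX.
set e := mu vv.
have hv := decE (vv ^+ s); rewrite muX // -/e in hv.
move: (dec (vv ^+ s)) hv => D hv.
set P := pdec (map_poly Theta (emb b)).
set H2 := 'X * (D *: emb (map_poly th b) + vv ^+ s *: P + vv ^+ s.+1 *: map_poly Theta h).
have key : 'X * map_poly Theta (uu ^+ s *: emb b + uu ^+ s.+1 *: h) =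
    uu ^+ s *: emb (e ^+ s *: ('X * map_poly th b)) + uu ^+ s.+1 *: H2.
  rewrite rmorphD /= !map_polyZ !rmorphXn /= TuuE (pdecE (map_poly Theta (emb b))) mup_Temb.
  rewrite -/P embZ embXM /H2 !exprMn.
  move: (vv ^+ s.+1) => V1; rewrite hv.
  rewrite -!mul_polyC !(polyCM, polyCD, rmorphXn) /=.
  clear H2; move: (uu%:P) ((embF (e ^+ s))%:P) (D%:P) (V1%:P) (emb (map_poly th b)) P (map_poly Theta h) => U E0 D0 V0 B0 P0 H0.
  rewrite exprS.
  move: (U ^+ s) => Us. ring.
have Hs : Tor J' s (e ^+ s *: ('X * map_poly th b)).
  by exists H2; rewrite -key -skmulX; apply: JX.
have es : e ^+ s != 0.
  case: s {H key Hs hv H2} sk => [|s] sk; first by rewrite expr0 oner_neq0.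
  by rewrite expf_neq0 // e_neq0 //; apply: leq_ltn_trans sk.
have := TorZ (e ^+ s)^-1 Hs; by rewrite scalerA mulVf // scale1r.
Qed.

Lemma TorXn s b i : (s < k)%N -> Tor J' s b ->
  Tor J' s ('X^i * map_poly (iter i th) b).
Proof.
move=> sk Hb; elim: i => [|i IH].
  by rewrite expr0 mul1r map_poly_id.
have -> : 'X^(i.+1) * map_poly (iter i.+1 th) b = 'X * map_poly th ('X^i * map_poly (iter i th) b).
  apply/polyP => n; rewrite coefXnM coefXM; case: n => [|n] //=.
  rewrite [in RHS](coef_map_id0 _ _ th0) coefXnM ltnS subSS; case: ltnP => _; first by rewrite th0.
  by rewrite !coef_map_id0 // (iter_sg0 th0).
exact: TorX.
Qed.

Lemma Tor_skmul s q b : (s < k)%N -> Tor J' s b -> Tor J' s (skmul th q b).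
Proof.
move=> sk Hb; rewrite /skmul; elim/big_ind: _ => //.
- exact: Tor0.
- exact: TorD.
move=> i _; rewrite -scalerAl; apply: TorZ; exact: TorXn.
Qed.
End TorJ.

Lemma TorS (J' : {poly R} -> Prop) s b : closedJ J' -> Tor J' s b -> Tor J' s.+1 b.
Proof.
case=> _ _ JZ _ [h H]; exists h.
have := JZ uu _ H; congr J'.
by rewrite scalerDr !scalerA -!exprS.
Qed.

Lemma TorLe (J' : {poly R} -> Prop) s t b : closedJ J' -> (s <= t)%N -> Tor J' s b -> Tor J' t b.
Proof.
move=> cJ /subnK <-; elim: (t - s)%N => [|n IH] // Hb.
by rewrite addSn; apply: TorS => //; apply: IH.
Qed.

Lemma TorN (J' : {poly R} -> Prop) s b : closedJ J' -> Tor J' s b -> Tor J' s (- b).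
Proof. by move=> cJ Hb; rewrite -scaleN1r; apply: TorZ. Qed.

Lemma embN p : emb (- p) = - emb p.
Proof. by rewrite -scaleN1r embZ embFN embF1 scaleN1r. Qed.

Lemma mup_monic P : P \is monic -> mup P \is monic.
Proof.
move=> mP; rewrite monicE lead_coef_map_id0 ?mu0 //; move/monicP: mP => ->; rewrite mu1 //.
exact: oner_neq0.
Qed.

Lemma sum_factor m n (X : nat -> {poly R}) :
  \sum_(m <= T < n) uu ^+ T *: X T = uu ^+ m *: \sum_(m <= T < n) uu ^+ (T - m) *: X T.
Proof.
rewrite scaler_sumr; apply: eq_big_nat => T /andP [hm _].
by rewrite scalerA -exprD subnKC.
Qed.

Variable fj : {poly R}.
Hypothesis hfjm : fj \is monic.
Variable lj : nat.
Hypothesis hsz : (size (mup fj) <= lj.+1)%N.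
Variable J : {poly R} -> Prop.
Hypothesis hJ : left_ideal_over Theta fj J.

Lemma JM g a : J a -> J (skmul Theta g a).
Proof. by case: hJ => _ _ JM _; apply: JM. Qed.
Lemma JD a b : J a -> J b -> J (a + b).
Proof. by case: hJ => _ JD _ _; apply: JD. Qed.
Lemma JZ (e : R) a : J a -> J (e *: a).
Proof. by move=> Ja; rewrite -(skmulCl Theta); apply: JM. Qed.
Lemma JN a : J a -> J (- a).
Proof. by move=> Ja; rewrite -scaleN1r; apply: JZ. Qed.
Lemma J0 : J 0.
Proof. by case: hJ. Qed.

Lemma cJ : closedJ J.
Proof.
split; [exact: J0 | exact: JD | exact: JZ | move=> a Ja; exact: JM].
Qed.

Definition JG (G : {poly R}) (P : {poly R}) := exists c, P = skmul Theta c G.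

Lemma skmul_XM c G : skmul Theta 'X (skmul Theta c G) = skmul Theta ('X * map_poly Theta c) G.
Proof.
rewrite skmulX [RHS](@skmulE _ _ (size c).+1); last first.
  apply: leq_trans (size_polyMleq _ _) _; rewrite size_polyX /=.
  by apply: size_poly.
rewrite big_ord_recl coefXM eqxx scale0r mul0r add0r /skmul rmorph_sum mulr_sumr.
apply: eq_bigr => i _; rewrite coefXM /= (coef_map_id0 _ _ (rmorph0 Theta)).
rewrite rmorphM /= map_polyZ /= map_polyXn -map_poly_comp.
rewrite (@eq_map_poly _ _ (Theta \o iter i Theta) (iter i.+1 Theta)) //.
by rewrite mulrA -scalerAr exprS.
Qed.

Lemma cJG G : closedJ (JG G).
Proof.
split.
- by exists 0; rewrite skmul0l.
- by move=> a b [c1 ->] [c2 ->]; exists (c1 + c2); rewrite skmulDl.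
- by move=> e a [c ->]; exists (e *: c); rewrite skmulZl.
- by move=> a [c ->]; exists ('X * map_poly Theta c); rewrite skmul_XM.
Qed.

Lemma Jfj : J fj.
Proof. by case: hJ => _ _ _ Jq; have := Jq 1; rewrite skmul1l. Qed.

Lemma mupfj_Tor s : Tor J s (mup fj).
Proof.
exists (pdec fj); rewrite exprSr -scalerA -scalerDr -pdecE.
by apply: JZ; exact: Jfj.
Qed.

Lemma mupfj_neq0 : mup fj != 0.
Proof. by apply: monic_neq0; apply: mup_monic. Qed.

Lemma min_ex s n : forall b, Tor J s b -> b != 0 -> (size b <= n)%N ->
  exists a, [/\ Tor J s a, a != 0 & forall b', Tor J s b' -> b' != 0 -> (size a <= size b')%N].
Proof.
elim: n => [|n IH] b Hb b0 hs.
  by move: hs; rewrite leqn0 size_poly_eq0 (negbTE b0).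
case: (classic (exists b', [/\ Tor J s b', b' != 0 & (size b' < size b)%N])).
  move=> [b' [Hb' b'0 hlt]]; apply: (IH b') => //; slia.
move=> hno; exists b; split => // b' Hb' b'0; rewrite leqNgt; apply/negP => hlt.
by apply: hno; exists b'.
Qed.

Lemma gen_ex s : (s < k)%N -> exists a, [/\ a \is monic, Tor J s a,
  (size a <= size (mup fj))%N & forall b, Tor J s b -> exists q, b = skmul th q a].
Proof.
move=> sk.
have [a0 [Ha0 a00 hmin]] := min_ex (mupfj_Tor s) mupfj_neq0 (leqnn _).
set a := (lead_coef a0)^-1 *: a0.
have l0 : lead_coef a0 != 0 by rewrite lead_coef_eq0.
have sa : size a = size a0 by rewrite size_scale // invr_eq0.
have ma : a \is monic by rewrite monicE lead_coefZ mulVf.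
have Ha : Tor J s a by apply: TorZ => //; exact: cJ.
exists a; split => //.
  by rewrite sa; apply: hmin; [exact: mupfj_Tor | exact: mupfj_neq0].
move=> b Hb; have [q [r [e hr]]] := skdiv th0 th1 ma b.
exists q; have Hr : Tor J s r.
  have -> : r = b - skmul th q a by rewrite e addrAC subrr add0r.
  apply: TorD; [exact: cJ | exact: Hb | apply: TorN; first exact: cJ].
  by apply: Tor_skmul => //; exact: cJ.
have [r0|r0] := eqVneq r 0; first by rewrite e r0 addr0.
exfalso; have := hmin _ Hr r0; move: hr; rewrite sa; move: (size r) (size a0) => x y; lia.
Qed.

Definition Aspec (A : nat -> {poly F}) := forall s, (s < k)%N ->
  [/\ A s \is monic, Tor J s (A s),
  (size (A s) <= size (mup fj))%N & forall b, Tor J s b -> exists q, b = skmul th q (A s)].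

Lemma A_ex : exists A, Aspec A.
Proof.
have H : forall s, exists a, (s < k)%N -> [/\ a \is monic, Tor J s a,
  (size a <= size (mup fj))%N & forall b, Tor J s b -> exists q, b = skmul th q a].
  move=> s; case: (ltnP s k) => sk; last by exists 0.
  by have [a Ha] := gen_ex sk; exists a.
exists (fun s => proj1_sig (constructive_indefinite_description _ (H s))).
move=> s sk; exact: (proj2_sig (constructive_indefinite_description _ (H s)) sk).
Qed.

Variable A : nat -> {poly F}.
Hypothesis hA : Aspec A.

Lemma red m : forall s, (s + m = k)%N -> forall P Q, J (P + uu ^+ s *: Q) ->
  exists rr : nat -> {poly F},
    (forall t, (s <= t < k)%N -> (size (rr t) < size (A t))%N) /\
    J (P + \sum_(s <= t < k) uu ^+ t *: emb (rr t)).
Proof.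
elim: m => [|m IH] s hsm P Q HJ.
  have sk : s = k by rewrite -hsm addn0.
  exists (fun _ => 0); split.
    by move=> t /andP [h1 h2]; exfalso; move: h1 h2; rewrite sk; lia.
  rewrite big_geq ?addr0; last by rewrite sk.
  by move: HJ; rewrite sk uuk // scale0r addr0.
have sk : (s < k)%N by lia.
have [mA HA _ gA] := hA sk.
have [q [rem [ec hrem]]] := skdiv th0 th1 mA (mup Q).
have Tq : Tor J s (skmul th q (A s)) by apply: Tor_skmul => //; exact: cJ.
case: Tq => h' Hh'.
have HJ2 : J ((P + uu ^+ s *: emb rem) + uu ^+ s.+1 *: (pdec Q - h')).
  have -> : (P + uu ^+ s *: emb rem) + uu ^+ s.+1 *: (pdec Q - h') =
      (P + uu ^+ s *: Q) - (uu ^+ s *: emb (skmul th q (A s)) + uu ^+ s.+1 *: h').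
    rewrite {2}(pdecE Q) ec embD exprSr -!mul_polyC !polyCM.
    ring.
  by apply: JD => //; apply: JN.
have e1 : (s.+1 + m = k)%N by rewrite addSnnS.
have [rr [hs Hrr]] := IH s.+1 e1 _ _ HJ2.
exists (fun t => if t == s then rem else rr t); split.
  move=> t /andP [h1 h2]; case: eqP => [->|ne] //.
  by apply: hs; rewrite h2 andbT ltn_neqAle h1 andbT eq_sym; apply/eqP.
rewrite big_ltn // eqxx.
rewrite (@eq_big_nat _ _ _ s.+1 k _ (fun t => uu ^+ t *: emb (rr t))); last first.
  by move=> t /andP [h1 _]; rewrite ifN // neq_ltn h1 orbT.
by rewrite addrA.
Qed.

Definition Gs (RR : nat -> nat -> {poly F}) s :=
  uu ^+ s *: emb (A s) + \sum_(s.+1 <= t < k) uu ^+ t *: emb (RR s t).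

Definition RRspec (RR : nat -> nat -> {poly F}) := forall s, (s < k)%N ->
  (forall t, (s.+1 <= t < k)%N -> (size (RR s t) < size (A t))%N) /\ J (Gs RR s).

Lemma RR_ex : exists RR, RRspec RR.
Proof.
have H : forall s, exists rr : nat -> {poly F}, (s < k)%N ->
  (forall t, (s.+1 <= t < k)%N -> (size (rr t) < size (A t))%N) /\
  J (uu ^+ s *: emb (A s) + \sum_(s.+1 <= t < k) uu ^+ t *: emb (rr t)).
  move=> s; case: (ltnP s k) => sk; last by exists (fun _ => 0).
  have [_ [h' Hh'] _ _] := hA sk.
  have [rr Hrr] := red (m := (k - s.+1)%N) (s := s.+1) (subnKC sk) Hh'.
  by exists rr.
exists (fun s => proj1_sig (constructive_indefinite_description _ (H s))).
move=> s sk; exact: (proj2_sig (constructive_indefinite_description _ (H s)) sk).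
Qed.

Variable RR : nat -> nat -> {poly F}.
Hypothesis hRR : RRspec RR.

Lemma GsE s : Gs RR s = uu ^+ s *: emb (A s) +
   uu ^+ s.+1 *: \sum_(s.+1 <= t < k) uu ^+ (t - s.+1) *: emb (RR s t).
Proof. by rewrite /Gs sum_factor. Qed.

Lemma TorG s : (s < k)%N -> Tor (JG (Gs RR s)) s (A s).
Proof.
move=> sk; exists (\sum_(s.+1 <= t < k) uu ^+ (t - s.+1) *: emb (RR s t)).
by exists 1; rewrite skmul1l GsE.
Qed.

Lemma gen m : forall s, (s + m = k)%N -> forall Q, J (uu ^+ s *: Q) ->
  exists c : nat -> {poly R}, uu ^+ s *: Q = \sum_(s <= i < k) skmul Theta (c i) (Gs RR i).
Proof.
elim: m => [|m IH] s hsm Q HJ.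
  have sk : s = k by rewrite -hsm addn0.
  exists (fun _ => 0); rewrite big_geq; last by rewrite sk.
  by rewrite sk uuk // scale0r.
have sk : (s < k)%N by lia.
have [mA HA _ gA] := hA sk.
have Tb : Tor J s (mup Q).
  by exists (pdec Q); rewrite exprSr -scalerA -scalerDr -pdecE.
have [q eb] := gA _ Tb.
have TG : Tor (JG (Gs RR s)) s (mup Q).
  by rewrite eb; apply: Tor_skmul => //; [exact: cJG | exact: TorG].
case: TG => h'' [c0 Hc0].
have JGs : J (Gs RR s) by case: (hRR sk).
have HJ2 : J (uu ^+ s.+1 *: (pdec Q - h'')).
  have -> : uu ^+ s.+1 *: (pdec Q - h'') = uu ^+ s *: Q - skmul Theta c0 (Gs RR s).
    rewrite -Hc0 {2}(pdecE Q) exprSr -!mul_polyC !polyCM.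
    ring.
  by apply: JD => //; apply: JN; apply: JM.
have e1 : (s.+1 + m = k)%N by rewrite addSnnS.
have [c' Hc'] := IH s.+1 e1 _ HJ2.
exists (fun i => if i == s then c0 else c' i).
rewrite big_ltn // eqxx.
rewrite (@eq_big_nat _ _ _ s.+1 k _ (fun i => skmul Theta (c' i) (Gs RR i))); last first.
  by move=> t /andP [h1 _]; rewrite ifN // neq_ltn h1 orbT.
rewrite -Hc' -Hc0 {1}(pdecE Q) exprSr -!mul_polyC !polyCM.
ring.
Qed.

Definition aa (i : nat) := A i.-1.
Definition rr (i t : nat) := RR i.-1 (i.-1 + t).

Lemma reidx s (f : nat -> {poly R}) : (s < k)%N ->
  \sum_(1 <= t < (k - s.+1).+1) f (s + t)%N = \sum_(s.+1 <= T < k) f T.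
Proof.
move=> sk; rewrite [in RHS](_ : s.+1 = 1 + s)%N // big_addn.
have -> : (k - s = (k - s.+1).+1)%N by lia.
by apply: eq_big_nat => t _; rewrite addnC.
Qed.

Lemma gen_eltE s : (s < k)%N -> gen_elt k aa rr s.+1 = Gs RR s.
Proof.
move=> sk; rewrite /gen_elt /Gs /=; congr (_ + _).
exact: (reidx (fun T => uu ^+ T *: emb (RR s T)) sk).
Qed.

Lemma J_gen i : (1 <= i <= k)%N -> J (gen_elt k aa rr i).
Proof.
case: i => [//|s] /= sk; rewrite gen_eltE //.
by case: (hRR sk).
Qed.

Lemma gen_diff s (r1 r2 : nat -> nat -> {poly F}) : (s < k)%N ->
  gen_elt k aa r1 s.+1 - gen_elt k aa r2 s.+1 =
  \sum_(s.+1 <= T < k) uu ^+ T *: emb (r1 s.+1 (T - s)%N - r2 s.+1 (T - s)%N).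
Proof.
move=> sk; rewrite /gen_elt opprD addrACA subrr add0r -sumrB.
rewrite -(reidx (fun T => uu ^+ T *: emb (r1 s.+1 (T - s)%N - r2 s.+1 (T - s)%N)) sk).
apply: eq_big_nat => t _ /=; rewrite addKn embD embN scalerBr.
by [].
Qed.

Lemma props : [/\ canonical_data Theta fj lj aa rr,
        (forall h, J h <-> in_gen_ideal Theta fj aa rr h) &
        (forall r' : nat -> nat -> {poly F},
           canonical_data Theta fj lj aa r' ->
           (forall h, J h <-> in_gen_ideal Theta fj aa r' h) ->
           forall i t, (1 <= i)%N -> (1 <= t <= k - i)%N -> r' i t = rr i t)].
Proof.
split.
- split.
  + case=> [//|s] /= sk; right; have [mA HA _ gA] := hA sk.
    by split => //; apply: gA; exact: mupfj_Tor.
  + case=> [//|s] /andP [_ sk].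
    have sk' : (s < k)%N by move: sk; lia.
    have kk : (k.-1 < k)%N by lia.
    have [_ HA _ _] := hA sk'.
    have [_ _ _ gA] := hA kk.
    apply: gA; apply: (TorLe cJ) HA; move: sk; lia.
  + case=> [//|s] t _ /andP [t1 tk].
    have sk : (s < k)%N by move: t1 tk; lia.
    have [hs _] := hRR sk.
    have st : (s + t < k)%N by move: t1 tk; lia.
    have [_ _ hsA _] := hA st.
    rewrite /rr /=.
    have h : (size (RR s (s + t)) < size (A (s + t)))%N.
      by apply: hs; apply/andP; split; [move: t1; lia | exact: st].
    move: h hsA hsz; move: (size (RR s (s + t))) (size (A (s + t))) (size (mup fj)) => x y z; lia.
  + case=> [//|i] /andP [i2 ik] _ t /andP [t1 ti].
    case: t t1 ti => [//|t] _ ti /=.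
    have sk : (t < k)%N by move: ti ik; lia.
    have [hs _] := hRR sk.
    rewrite /rr /aa /=.
    have -> : (t + (i.+1 - t.+1) = i)%N by move: ti; lia.
    by apply: hs; move: ti ik; lia.
- move=> h; split.
  + move=> Jh.
    have Jh0 : J (uu ^+ 0 *: h) by rewrite expr0 scale1r.
    have [c Hc] := gen (add0n k) Jh0.
    exists (fun i => c i.-1), 0; rewrite skmul0l addr0.
    rewrite -[h]scale1r -(expr0 uu) Hc big_add1 /=.
    apply: eq_big_nat => i /andP [_ ik]; by rewrite gen_eltE.
  + move=> [c [q ->]]; apply: JD; last by apply: JM; exact: Jfj.
    rewrite big_seq; elim/big_ind: _ => //; [exact: J0 | exact: JD |].
    move=> i; rewrite mem_index_iota ltnS => hi; apply: JM; exact: J_gen.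
- move=> r' [_ _ _ c4'] iff' i t hi /andP [t1 tk].
  case: i hi tk => [//|s] _ tk.
  have sk : (s < k)%N by move: t1 tk; lia.
  set d := fun T => rr s.+1 (T - s)%N - r' s.+1 (T - s)%N.
  have Jg : J (gen_elt k aa rr s.+1) by apply: J_gen; rewrite /= sk.
  have Jg' : J (gen_elt k aa r' s.+1).
    apply/iff'; exists (fun l => if l == s.+1 then 1 else 0), 0.
    rewrite skmul0l addr0 (bigD1_seq s.+1) ?mem_index_iota ?iota_uniq //= ?ltnS ?sk //.
    rewrite eqxx skmul1l big1 ?addr0 // => l hl; by rewrite ifN // skmul0l.
  have JD0 : J (\sum_(s.+1 <= T < k) uu ^+ T *: emb (d T)).
    by rewrite -gen_diff //; apply: JD => //; apply: JN.
  have low : forall T0, (s < T0 < k)%N -> (forall T, (s < T < T0)%N -> d T = 0) ->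
      Tor J T0 (d T0).
    move=> T0 /andP [h1 h2] hz.
    move: JD0; rewrite (big_cat_nat (n:=T0)) //; last exact: ltnW.
    rewrite big_nat_cond big1 ?add0r; last first.
      by move=> T /andP [/andP [hT1 hT2] _]; rewrite hz ?hT1 ?hT2 // emb0 scaler0.
    rewrite big_ltn // sum_factor => HJ.
    by exists (\sum_(T0.+1 <= T < k) uu ^+ (T - T0.+1) *: emb (d T)); move: HJ; rewrite /= add0r.
  have main : forall n T, (s < T)%N -> (T < n)%N -> (T < k)%N -> d T = 0.
    elim=> [//|n IH] T h1 h2 h3.
    case: (ltnP T n) => h4; first exact: IH.
    have eT : T = n by move: h2 h4; lia.
    have [mA _ _ gA] := hA h3.
    have hT0 : (s < T < k)%N by rewrite h1 h3.
    have hz : forall T', (s < T' < T)%N -> d T' = 0.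
      by move=> T' /andP [h5 h6]; apply: IH => //; [rewrite -eT | apply: ltn_trans h6 h3].
    have [q eq] := gA _ (low T hT0 hz).
    apply: (skdiv_small th0 th1 mA eq).
    apply: leq_ltn_trans (size_polyD _ _) _; rewrite size_polyN gtn_max; apply/andP; split.
      have [hs _] := hRR sk; rewrite /rr /=.
      have -> : (s + (T - s) = T)%N by move: h1; lia.
      by apply: hs; rewrite h1 h3.
    have := c4' T.+1 _ (_ : aa T.+1 != 0) s.+1 _.
    rewrite /aa /=.
    have -> : (T.+1 - s.+1 = T - s)%N by [].
    apply; first by move: h1 h3; lia.
      by apply: monic_neq0.
    by move: h1; lia.
  have := main (s + t).+1 (s + t)%N _ (ltnSn _) _.
  rewrite /d addKn => /(_ _ _) h.
  by apply/eqP; rewrite eq_sym -subr_eq0 h //; move: t1 tk sk; lia.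
Qed.
End Main.

Theorem theorem3p2
  (p m k n s : nat) (F : finFieldType)
  (hp : prime p) (hpodd : odd p) (hm : (1 <= m)%N) (hk : (1 <= k)%N)
  (hn : (1 <= n)%N) (hs : (1 <= s)%N) (hnp : coprime n p)
  (hF : #|F| = (p ^ m)%N)
  (Theta : {rmorphism Rk F k -> Rk F k}) (hTbij : bijective Theta)
  (hTord : forall a, iter (n * p ^ s) Theta a = a)
  (lambda : Rk F k) (hlu : lambda \is a GRing.unit) (hlfix : Theta lambda = lambda)
  (f : {poly Rk F k}) (j : nat) (hj : (1 <= j)%N)
  (hfmon : f \is monic) (hfirr : skirreducible Theta f)
  (hfdiv : rdivides Theta f ('X^(n * p ^ s) - lambda%:P))
  (hfjc : skcentral Theta (skpow Theta f j))
  (hfjdiv : rdivides Theta (skpow Theta f j) ('X^(n * p ^ s) - lambda%:P))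
  (J : {poly Rk F k} -> Prop)
  (hJ : left_ideal_over Theta (skpow Theta f j) J) :
  let l := (size f).-1 in
  exists (a : nat -> {poly F}) (r : nat -> nat -> {poly F}),
    [/\ canonical_data Theta (skpow Theta f j) (l * j) a r,
        (forall h, J h <-> in_gen_ideal Theta (skpow Theta f j) a r h) &
        (forall r' : nat -> nat -> {poly F},
           canonical_data Theta (skpow Theta f j) (l * j) a r' ->
           (forall h, J h <-> in_gen_ideal Theta (skpow Theta f j) a r' h) ->
           forall i t, (1 <= i)%N -> (1 <= t <= k - i)%N -> r' i t = r i t)].
Proof.
move=> l.
have T0 : Theta 0 = 0 := rmorph0 Theta.
have T1 : Theta 1 = 1 := rmorph1 Theta.
have sf : (0 < size f)%N by rewrite size_poly_gt0 monic_neq0.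
have hpow : forall n0, skpow Theta f n0 \is monic /\ size (skpow Theta f n0) = (l * n0).+1.
  elim=> [|n0 [IHm IHs]]; first by rewrite /skpow /= monic1 size_poly1 muln0.
  have e : skpow Theta f n0.+1 = skmul Theta f (skpow Theta f n0) by [].
  rewrite e; split; first exact: skmul_monic.
  rewrite size_skmul_monic ?monic_neq0 // IHs /l mulnS.
  move: sf; move: (size f) ((size f).-1 * n0)%N => x y; lia.
have [fjm fjs] := hpow j.
have hsz : (size (mu_poly (skpow Theta f j)) <= (l * j).+1)%N.
  by rewrite -fjs; apply: size_poly.
have [A hA] := A_ex hk hTbij fjm hsz hJ.
have [RR hRR] := RR_ex hk hTbij fjm hsz hJ hA.
exists (aa A), (rr RR).
have H := props hk hTbij fjm hsz hJ hA hRR.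
exact H.
Qed.
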